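(* There is a universal constant $c>0$ and an algorithm such that, whenever $(F,f)$ satisfies Assumption A with $\nu\le c\sqrt{\epsilon^3/\rho}$ and $\ell>\sqrt{\rho\epsilon}$, the algorithm, using only function-value queries of $f$ (a number of queries exponential in the problem parameters, e.g. $e^{O(d^2\log(d/\epsilon))}$ up to the dependence on $B,\ell,\rho$), outputs an $\epsilon$-second-order stationary point of $F$.
   Context: Assumption A for $F,f:\mathbb{R}^d\to\mathbb{R}$: $F$ is $B$-bounded ($|F|\le B$), $\ell$-gradient Lipschitz, $\rho$-Hessian Lipschitz (spectral norm), and $\sup_x|F(x)-f(x)|\le\nu$. An $\epsilon$-SOSP of $F$ is a point $x$ with $\|\nabla F(x)\|\le\epsilon$ and $\lambda_{\min}(\nabla^2F(x))\ge-\sqrt{\rho\epsilon}$. (Here an ''$\epsilon$-SOSP'' is understood up to absolute constant factors in $\epsilon$.) *)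

(* Defs.v *)
From Stdlib Require Import Reals Lra Lia Arith.
Open Scope R_scope.

(* A point of R^d is a real sequence vanishing from index d on. *)
Record vec (d : nat) : Type := MkVec {
  vc : nat -> R ;
  vsupp : forall i, (d <= i)%nat -> vc i = 0 }.
Arguments MkVec {d} _ _.
Arguments vc {d} _ _.
Arguments vsupp {d} _ _ _.

Fixpoint sumR (n : nat) (f : nat -> R) : R :=
  match n with O => 0 | S m => sumR m f + f m end.

Definition dot {d} (x y : vec d) : R := sumR d (fun i => vc x i * vc y i).
Definition vnorm {d} (x : vec d) : R := sqrt (dot x x).

Definition vadd {d} (x y : vec d) : vec d.
Proof.
  refine (MkVec (fun i => vc x i + vc y i) _).
  intros i Hi. rewrite (vsupp x i Hi), (vsupp y i Hi). ring.
Defined.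

Definition vsub {d} (x y : vec d) : vec d.
Proof.
  refine (MkVec (fun i => vc x i - vc y i) _).
  intros i Hi. rewrite (vsupp x i Hi), (vsupp y i Hi). ring.
Defined.

(* d x d real matrices (only entries with indices < d matter) *)
Definition mat := nat -> nat -> R.

Definition mv {d} (A : mat) (v : vec d) : vec d.
Proof.
  refine (MkVec (fun i => if Nat.ltb i d then sumR d (fun j => A i j * vc v j) else 0) _).
  intros i Hi. apply Nat.ltb_ge in Hi. rewrite Hi. reflexivity.
Defined.

Definition msub (A B : mat) : mat := fun i j => A i j - B i j.

Definition opnorm_le (d : nat) (A : mat) (c : R) : Prop :=
  forall v : vec d, vnorm (mv A v) <= c * vnorm v.

Definition eigenvalue (d : nat) (A : mat) (lam : R) : Prop :=
  exists v : vec d, (exists i, (i < d)%nat /\ vc v i <> 0) /\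
    forall i, vc (mv A v) i = lam * vc v i.

Definition lambda_min_ge (d : nat) (A : mat) (s : R) : Prop :=
  forall lam, eigenvalue d A lam -> s <= lam.

Definition has_gradient {d} (F : vec d -> R) (g : vec d -> vec d) : Prop :=
  forall x : vec d, forall e, 0 < e -> exists del, 0 < del /\
    forall h : vec d, vnorm h < del ->
      Rabs (F (vadd x h) - F x - dot (g x) h) <= e * vnorm h.

(* H x is the Jacobian of g at x (the Hessian of F when g is its gradient) *)
Definition has_jacobian {d} (g : vec d -> vec d) (H : vec d -> mat) : Prop :=
  forall x : vec d, forall e, 0 < e -> exists del, 0 < del /\
    forall h : vec d, vnorm h < del ->
      vnorm (vsub (vsub (g (vadd x h)) (g x)) (mv (H x) h)) <= e * vnorm h.

Definition assumptionA (d : nat) (F f : vec d -> R) (gF : vec d -> vec d)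
    (HF : vec d -> mat) (B l rho nu : R) : Prop :=
  has_gradient F gF /\ has_jacobian gF HF /\
  (forall x, Rabs (F x) <= B) /\
  (forall x y, vnorm (vsub (gF x) (gF y)) <= l * vnorm (vsub x y)) /\
  (forall x y, opnorm_le d (msub (HF x) (HF y)) (rho * vnorm (vsub x y))) /\
  (forall x, Rabs (F x - f x) <= nu).

Definition is_SOSP {d} (gF : vec d -> vec d) (HF : vec d -> mat)
    (rho eps : R) (x : vec d) : Prop :=
  vnorm (gF x) <= eps /\ lambda_min_ge d (HF x) (- sqrt (rho * eps)).

(* An adaptive deterministic algorithm: either output a point, or query the
   oracle at a point and continue depending on the returned value. *)
Inductive qalg (d : nat) : Type :=
  | Ret : vec d -> qalg d
  | Ask : vec d -> (R -> qalg d) -> qalg d.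
Arguments Ret {d} _.
Arguments Ask {d} _ _.

Fixpoint run {d} (a : qalg d) (f : vec d -> R) : vec d * nat :=
  match a with
  | Ret x => (x, O)
  | Ask x k => let (y, n) := run (k (f x)) f in (y, S n)
  end.

(* Main.v *)
Require Import Defs.
From Stdlib Require Import Reals Lra Lia Arith List ZArith ClassicalDescription ClassicalEpsilon FunctionalExtensionality ProofIrrelevance.
Open Scope R_scope.

Lemma vec_ext {d} (a b : vec d) : (forall i, vc a i = vc b i) -> a = b.
Proof.
  destruct a as [fa pa], b as [fb pb]; simpl; intros H.
  assert (fa = fb) by (apply functional_extensionality; auto). subst fb.
  f_equal. apply proof_irrelevance.
Qed.

Definition vscale {d} (a : R) (v : vec d) : vec d.
Proof.
  refine (MkVec (fun i => a * vc v i) _).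
  intros i Hi. rewrite (vsupp v i Hi). ring.
Defined.

Definition pt {d} (x : vec d) (t : R) (w : vec d) : vec d := vadd x (vscale t w).

Lemma sumR_ext n f g : (forall i, (i < n)%nat -> f i = g i) -> sumR n f = sumR n g.
Proof. induction n; simpl; intros H; auto. rewrite IHn by (intros; apply H; lia). rewrite (H n) by lia. auto. Qed.

Lemma sumR_plus n f g : sumR n (fun i => f i + g i) = sumR n f + sumR n g.
Proof. induction n; simpl; [ring|rewrite IHn; ring]. Qed.
Lemma sumR_minus n f g : sumR n (fun i => f i - g i) = sumR n f - sumR n g.
Proof. induction n; simpl; [ring|rewrite IHn; ring]. Qed.
Lemma sumR_scal n c f : sumR n (fun i => c * f i) = c * sumR n f.
Proof. induction n; simpl; [ring|rewrite IHn; ring]. Qed.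
Lemma sumR_nonneg n f : (forall i, (i < n)%nat -> 0 <= f i) -> 0 <= sumR n f.
Proof. induction n; simpl; intros H; [lra|]. assert (0 <= f n) by (apply H; lia).
  assert (0 <= sumR n f) by (apply IHn; intros; apply H; lia). lra. Qed.
Lemma sumR_le n f g : (forall i, (i < n)%nat -> f i <= g i) -> sumR n f <= sumR n g.
Proof. induction n; simpl; intros H; [lra|]. assert (f n <= g n) by (apply H; lia).
  assert (sumR n f <= sumR n g) by (apply IHn; intros; apply H; lia). lra. Qed.
Lemma sumR_term n f j : (forall i, (i < n)%nat -> 0 <= f i) -> (j < n)%nat -> f j <= sumR n f.
Proof. induction n; simpl; intros H Hj; [lia|].
  assert (0 <= sumR n f) by (apply sumR_nonneg; intros; apply H; lia).
  destruct (Nat.eq_dec j n). subst. lra.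
  assert (f j <= sumR n f) by (apply IHn; [intros; apply H; lia | lia]).
  assert (0 <= f n) by (apply H; lia). lra. Qed.
Lemma sumR_const n c : sumR n (fun _ => c) = INR n * c.
Proof. induction n; simpl sumR; [simpl; ring|]. rewrite IHn, S_INR. ring. Qed.

Lemma dot_comm {d} (x y : vec d) : dot x y = dot y x.
Proof. unfold dot. apply sumR_ext. intros; ring. Qed.
Lemma dot_add_l {d} (x y z : vec d) : dot (vadd x y) z = dot x z + dot y z.
Proof. unfold dot. rewrite <- sumR_plus. apply sumR_ext. intros; simpl; ring. Qed.
Lemma dot_sub_l {d} (x y z : vec d) : dot (vsub x y) z = dot x z - dot y z.
Proof. unfold dot. rewrite <- sumR_minus. apply sumR_ext. intros; simpl; ring. Qed.
Lemma dot_scale_l {d} a (x z : vec d) : dot (vscale a x) z = a * dot x z.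
Proof. unfold dot. rewrite <- sumR_scal. apply sumR_ext. intros; simpl; ring. Qed.
Lemma dot_add_r {d} (x y z : vec d) : dot z (vadd x y) = dot z x + dot z y.
Proof. rewrite !(dot_comm z). apply dot_add_l. Qed.
Lemma dot_sub_r {d} (x y z : vec d) : dot z (vsub x y) = dot z x - dot z y.
Proof. rewrite !(dot_comm z). apply dot_sub_l. Qed.
Lemma dot_scale_r {d} a (x z : vec d) : dot z (vscale a x) = a * dot z x.
Proof. rewrite !(dot_comm z). apply dot_scale_l. Qed.
Lemma dot_self_nonneg {d} (x : vec d) : 0 <= dot x x.
Proof. unfold dot. apply sumR_nonneg. intros; nra. Qed.
Lemma vnorm_nonneg {d} (x : vec d) : 0 <= vnorm x.
Proof. apply sqrt_pos. Qed.
Lemma vnorm_sq {d} (x : vec d) : vnorm x * vnorm x = dot x x.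
Proof. apply sqrt_sqrt, dot_self_nonneg. Qed.
Lemma vnorm_scale {d} a (x : vec d) : vnorm (vscale a x) = Rabs a * vnorm x.
Proof. unfold vnorm. rewrite dot_scale_l, dot_scale_r, <- Rmult_assoc.
  rewrite sqrt_mult; [| nra | apply dot_self_nonneg].
  f_equal. replace (a * a) with (Rsqr a) by reflexivity. apply sqrt_Rsqr_abs. Qed.

Lemma cauchy_schwarz {d} (x y : vec d) : Rabs (dot x y) <= vnorm x * vnorm y.
Proof.
  set (A := dot x x). set (Bq := dot y y). set (S := dot x y).
  assert (Hq : forall t, 0 <= A - 2 * t * S + t * t * Bq).
  { intros t. assert (H := dot_self_nonneg (vsub x (vscale t y))).
    rewrite dot_sub_l, !dot_sub_r, !dot_scale_l, !dot_scale_r in H.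
    unfold A, Bq, S. rewrite (dot_comm y x) in H. lra. }
  assert (HS : S * S <= A * Bq).
  { assert (HA : 0 <= A) by apply dot_self_nonneg. assert (HB : 0 <= Bq) by apply dot_self_nonneg.
    destruct (Req_dec Bq 0) as [HB0|HB0].
    - assert (S = 0).
      { destruct (Req_dec S 0); auto. exfalso. specialize (Hq ((A + 1) / (2 * S))).
        rewrite HB0 in Hq. replace (2 * ((A + 1) / (2 * S)) * S) with (A + 1) in Hq by (field; auto). lra. }
      rewrite H, HB0. lra.
    - specialize (Hq (S / Bq)).
      replace (A - 2 * (S / Bq) * S + S / Bq * (S / Bq) * Bq) with ((A * Bq - S * S) / Bq) in Hq by (field; auto).
      assert (0 < Bq) by lra.
      assert (0 <= (A * Bq - S * S) / Bq * Bq) by nra.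
      replace ((A * Bq - S * S) / Bq * Bq) with (A * Bq - S * S) in H0 by (field; lra). lra. }
  rewrite <- (sqrt_Rsqr_abs S). unfold vnorm. rewrite <- sqrt_mult by apply dot_self_nonneg.
  apply sqrt_le_1_alt. unfold Rsqr. fold A Bq S. lra.
Qed.

Lemma vnorm_add {d} (x y : vec d) : vnorm (vadd x y) <= vnorm x + vnorm y.
Proof.
  assert (H1 := vnorm_nonneg (vadd x y)). assert (H2 := vnorm_nonneg x). assert (H3 := vnorm_nonneg y).
  assert (vnorm (vadd x y) * vnorm (vadd x y) <= (vnorm x + vnorm y) * (vnorm x + vnorm y)).
  { rewrite vnorm_sq, dot_add_l, !dot_add_r. assert (H := cauchy_schwarz x y).
    rewrite (dot_comm y x). assert (E1 := vnorm_sq x). assert (E2 := vnorm_sq y).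
    assert (dot x y <= vnorm x * vnorm y) by (eapply Rle_trans; [apply Rle_abs | exact H]). nra. }
  nra.
Qed.

Lemma vsub_as_add {d} (x y : vec d) : vsub x y = vadd x (vscale (-1) y).
Proof. apply vec_ext; intros; simpl; ring. Qed.

Lemma vnorm_sub {d} (x y : vec d) : vnorm (vsub x y) <= vnorm x + vnorm y.
Proof. rewrite vsub_as_add. eapply Rle_trans. apply vnorm_add. rewrite vnorm_scale.
  replace (Rabs (-1)) with 1 by (rewrite Rabs_left; lra). lra. Qed.

Lemma vnorm_tri {d} (x y : vec d) : vnorm x <= vnorm (vsub x y) + vnorm y.
Proof. replace x with (vadd (vsub x y) y) at 1 by (apply vec_ext; intros; simpl; ring).
  apply vnorm_add. Qed.

Lemma mv_scale {d} A a (v : vec d) : mv A (vscale a v) = vscale a (mv A v).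
Proof. apply vec_ext; intros i; simpl. destruct (Nat.ltb i d). rewrite <- sumR_scal.
  apply sumR_ext; intros; simpl; ring. ring. Qed.
Lemma mv_sub {d} A (v w : vec d) : mv A (vsub v w) = vsub (mv A v) (mv A w).
Proof. apply vec_ext; intros i; simpl. destruct (Nat.ltb i d). rewrite <- sumR_minus.
  apply sumR_ext; intros; simpl; ring. ring. Qed.
Lemma mv_msub {d} A B (v : vec d) : mv (msub A B) v = vsub (mv A v) (mv B v).
Proof. apply vec_ext; intros i; simpl. destruct (Nat.ltb i d). rewrite <- sumR_minus.
  apply sumR_ext; intros; unfold msub; simpl; ring. ring. Qed.

Lemma pt_0 {d} (x w : vec d) : pt x 0 w = x.
Proof. apply vec_ext; intros; simpl; ring. Qed.
Lemma pt_shift {d} (x w : vec d) t h : pt x (t + h) w = vadd (pt x t w) (vscale h w).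
Proof. apply vec_ext; intros; simpl; ring. Qed.
Lemma pt_sub {d} (x w : vec d) t : vsub (pt x t w) x = vscale t w.
Proof. apply vec_ext; intros; simpl; ring. Qed.
Lemma pt_opp {d} (x w : vec d) t : pt x (- t) w = pt x t (vscale (-1) w).
Proof. apply vec_ext; intros; simpl; ring. Qed.

Lemma D1 {d} (F : vec d -> R) gF (HG : has_gradient F gF) x w t :
  derivable_pt_lim (fun t => F (pt x t w)) t (dot (gF (pt x t w)) w).
Proof.
  intros e He. set (nw := vnorm w). assert (Hnw : 0 <= nw) by apply vnorm_nonneg.
  destruct (HG (pt x t w) (e / (nw + 1))) as [del [Hdel Hh]].
  { apply Rdiv_lt_0_compat; lra. }
  exists (mkposreal (del / (nw + 1)) ltac:(apply Rdiv_lt_0_compat; lra)). simpl.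
  intros h Hh0 Hhd.
  assert (Hv : vnorm (vscale h w) < del).
  { rewrite vnorm_scale. fold nw. apply Rlt_le_trans with ((del / (nw+1)) * (nw + 1)).
    assert (0 <= Rabs h) by apply Rabs_pos. nra. right; field; lra. }
  specialize (Hh _ Hv). rewrite <- pt_shift, dot_scale_r, vnorm_scale in Hh. fold nw in Hh.
  assert (Hah : 0 < Rabs h) by (apply Rabs_pos_lt; auto).
  replace ((F (pt x (t + h) w) - F (pt x t w)) / h - dot (gF (pt x t w)) w)
    with ((F (pt x (t + h) w) - F (pt x t w) - h * dot (gF (pt x t w)) w) / h) by (field; auto).
  unfold Rdiv at 1. rewrite Rabs_mult, Rabs_inv.
  apply Rle_lt_trans with (e / (nw + 1) * (Rabs h * nw) * / Rabs h).
  apply Rmult_le_compat_r; [left; apply Rinv_0_lt_compat; auto | auto].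
  replace (e / (nw + 1) * (Rabs h * nw) * / Rabs h) with (e * (nw / (nw + 1))) by (field; lra).
  assert (nw / (nw + 1) < 1). { apply Rmult_lt_reg_r with (nw + 1). lra.
    replace (nw / (nw + 1) * (nw + 1)) with nw by (field; lra). lra. }
  nra.
Qed.

Lemma D2 {d} (gF : vec d -> vec d) HF (HJ : has_jacobian gF HF) x w t :
  derivable_pt_lim (fun t => dot (gF (pt x t w)) w) t (dot (mv (HF (pt x t w)) w) w).
Proof.
  intros e He. set (nw := vnorm w). assert (Hnw : 0 <= nw) by apply vnorm_nonneg.
  destruct (HJ (pt x t w) (e / (nw * nw + 1))) as [del [Hdel Hh]].
  { apply Rdiv_lt_0_compat; nra. }
  exists (mkposreal (del / (nw + 1)) ltac:(apply Rdiv_lt_0_compat; lra)). simpl.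
  intros h Hh0 Hhd.
  assert (Hv : vnorm (vscale h w) < del).
  { rewrite vnorm_scale. fold nw. apply Rlt_le_trans with ((del / (nw+1)) * (nw + 1)).
    assert (0 <= Rabs h) by apply Rabs_pos. nra. right; field; lra. }
  specialize (Hh _ Hv). rewrite <- pt_shift, vnorm_scale in Hh. fold nw in Hh.
  set (V := vsub (vsub (gF (pt x (t + h) w)) (gF (pt x t w))) (mv (HF (pt x t w)) (vscale h w))) in Hh.
  assert (HV : dot V w = dot (gF (pt x (t + h) w)) w - dot (gF (pt x t w)) w - h * dot (mv (HF (pt x t w)) w) w).
  { unfold V. rewrite !dot_sub_l, mv_scale, dot_scale_l. ring. }
  assert (HCS := cauchy_schwarz V w). fold nw in HCS.
  assert (Hah : 0 < Rabs h) by (apply Rabs_pos_lt; auto).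
  replace ((dot (gF (pt x (t + h) w)) w - dot (gF (pt x t w)) w) / h - dot (mv (HF (pt x t w)) w) w)
    with (dot V w * / h) by (rewrite HV; field; auto). clear HV.
  rewrite Rabs_mult, Rabs_inv.
  apply Rle_lt_trans with (e / (nw * nw + 1) * (Rabs h * nw) * nw * / Rabs h).
  apply Rmult_le_compat_r; [left; apply Rinv_0_lt_compat; auto | ].
  eapply Rle_trans. exact HCS. apply Rmult_le_compat_r; auto.
  replace (e / (nw * nw + 1) * (Rabs h * nw) * nw * / Rabs h) with (e * (nw * nw / (nw * nw + 1))) by (field; nra).
  assert (nw * nw / (nw * nw + 1) < 1). { apply Rmult_lt_reg_r with (nw * nw + 1). nra.
    replace (nw * nw / (nw * nw + 1) * (nw * nw + 1)) with (nw * nw) by (field; nra). lra. }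
  nra.
Qed.


Lemma dlim_val f x l l' : derivable_pt_lim f x l -> l = l' -> derivable_pt_lim f x l'.
Proof. intros H ->; exact H. Qed.

Lemma dlim_poly a b x : derivable_pt_lim (fun s => a * s + b * s ^ 2) x (a + 2 * b * x).
Proof.
  assert (H1 := derivable_pt_lim_scal (fun y => y ^ 1) a x _ (derivable_pt_lim_pow x 1)).
  assert (H2 := derivable_pt_lim_scal (fun y => y ^ 2) b x _ (derivable_pt_lim_pow x 2)).
  assert (H := derivable_pt_lim_plus _ _ x _ _ H1 H2).
  eapply dlim_val. eapply derivable_pt_lim_ext; [|exact H].
  intros z. unfold plus_fct, mult_real_fct. simpl. ring. simpl. ring.
Qed.

Lemma dlim_sub_poly p p' a b x : derivable_pt_lim p x p' ->
  derivable_pt_lim (fun s => p s - (a * s + b * s ^ 2)) x (p' - (a + 2 * b * x)).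
Proof. intros H. exact (derivable_pt_lim_minus _ _ x _ _ H (dlim_poly a b x)). Qed.

Lemma taylor2 (p p1 p2 : R -> R) M T :
  (forall t, derivable_pt_lim p t (p1 t)) -> (forall t, derivable_pt_lim p1 t (p2 t)) ->
  (forall t, 0 <= t <= T -> Rabs (p2 t - p2 0) <= M * t) -> 0 < T ->
  Rabs (p T - p 0 - T * p1 0 - T ^ 2 / 2 * p2 0) <= M * T ^ 3.
Proof.
  intros Hp Hp1 HM HT.
  assert (HM0 : 0 <= M). { specialize (HM T ltac:(lra)). assert (0 <= Rabs (p2 T - p2 0)) by apply Rabs_pos. nra. }
  assert (Hstep : forall t, 0 <= t <= T -> Rabs (p1 t - p1 0 - t * p2 0) <= M * t ^ 2).
  { intros t Ht. destruct (Req_dec t 0) as [->|Ht0].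
    { replace (p1 0 - p1 0 - 0 * p2 0) with 0 by ring. rewrite Rabs_R0. nra. }
    destruct (MVT_cor2 (fun s => p1 s - (p2 0 * s + 0 * s ^ 2)) (fun s => p2 s - (p2 0 + 2 * 0 * s)) 0 t) as [c [Hc1 Hc2]].
    lra.
    { intros c Hc. apply dlim_sub_poly; auto. }
    replace (p1 t - p1 0 - t * p2 0) with ((p2 c - (p2 0 + 2 * 0 * c)) * (t - 0)) by (rewrite <- Hc1; ring).
    rewrite Rabs_mult. replace (p2 c - (p2 0 + 2 * 0 * c)) with (p2 c - p2 0) by ring.
    rewrite (Rabs_right (t - 0)) by lra.
    specialize (HM c ltac:(lra)). assert (0 <= Rabs (p2 c - p2 0)) by apply Rabs_pos.
    apply Rle_trans with (M * c * t). apply Rmult_le_compat; lra.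
    assert (M * c <= M * t) by (apply Rmult_le_compat_l; lra). simpl. nra. }
  destruct (MVT_cor2 (fun s => p s - (p1 0 * s + (p2 0 / 2) * s ^ 2)) (fun s => p1 s - (p1 0 + 2 * (p2 0 / 2) * s)) 0 T) as [c [Hc1 Hc2]].
  lra.
  { intros c Hc. apply dlim_sub_poly; auto. }
  replace (p T - p 0 - T * p1 0 - T ^ 2 / 2 * p2 0) with ((p1 c - (p1 0 + 2 * (p2 0 / 2) * c)) * (T - 0)) by (rewrite <- Hc1; field).
  rewrite Rabs_mult. replace (p1 c - (p1 0 + 2 * (p2 0 / 2) * c)) with (p1 c - p1 0 - c * p2 0) by field.
  rewrite (Rabs_right (T - 0)) by lra.
  specialize (Hstep c ltac:(lra)). assert (0 <= Rabs (p1 c - p1 0 - c * p2 0)) by apply Rabs_pos.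
  assert (M * c ^ 2 <= M * T ^ 2). { apply Rmult_le_compat_l; auto. apply pow_incr; lra. }
  replace (M * T ^ 3) with (M * T ^ 2 * (T - 0)) by ring. nra.
Qed.

Lemma dot_mv_lip {d} (A B : mat) (w : vec d) c :
  opnorm_le d (msub A B) c -> Rabs (dot (mv A w) w - dot (mv B w) w) <= c * vnorm w * vnorm w.
Proof.
  intros Hop. rewrite <- dot_sub_l, <- mv_msub. eapply Rle_trans. apply cauchy_schwarz.
  apply Rmult_le_compat_r. apply vnorm_nonneg. apply Hop.
Qed.

Lemma T2F {d} (F : vec d -> R) gF HF rho (HG : has_gradient F gF) (HJ : has_jacobian gF HF)
  (HLH : forall x y, opnorm_le d (msub (HF x) (HF y)) (rho * vnorm (vsub x y))) (Hr : 0 <= rho)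
  x w T : 0 < T ->
  Rabs (F (pt x T w) - F x - T * dot (gF x) w - T ^ 2 / 2 * dot (mv (HF x) w) w)
    <= rho * vnorm w ^ 3 * T ^ 3.
Proof.
  intros HT.
  assert (H := taylor2 (fun t => F (pt x t w)) (fun t => dot (gF (pt x t w)) w)
     (fun t => dot (mv (HF (pt x t w)) w) w) (rho * vnorm w ^ 3) T
     (D1 F gF HG x w) (D2 gF HF HJ x w)).
  cbv beta in H. rewrite !pt_0 in H. apply H; auto.
  intros t Ht. cbv beta. eapply Rle_trans. apply dot_mv_lip. apply HLH.
  rewrite pt_sub, vnorm_scale, Rabs_right by lra.
  assert (0 <= vnorm w) by apply vnorm_nonneg. right; ring.
Qed.

Lemma vnorm_opp {d} (w : vec d) : vnorm (vscale (-1) w) = vnorm w.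
Proof. rewrite vnorm_scale. replace (Rabs (-1)) with 1 by (rewrite Rabs_left; lra). ring. Qed.

Lemma GC_est {d} (F : vec d -> R) gF HF rho (HG : has_gradient F gF) (HJ : has_jacobian gF HF)
  (HLH : forall x y, opnorm_le d (msub (HF x) (HF y)) (rho * vnorm (vsub x y))) (Hr : 0 <= rho)
  x w h : 0 < h ->
  Rabs (F (pt x h w) - F (pt x (- h) w) - 2 * h * dot (gF x) w) <= 2 * rho * vnorm w ^ 3 * h ^ 3 /\
  Rabs (F (pt x h w) + F (pt x (- h) w) - 2 * F x - h ^ 2 * dot (mv (HF x) w) w) <= 2 * rho * vnorm w ^ 3 * h ^ 3.
Proof.
  intros Hh.
  assert (H1 := T2F F gF HF rho HG HJ HLH Hr x w h Hh).
  assert (H2 := T2F F gF HF rho HG HJ HLH Hr x (vscale (-1) w) h Hh).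
  rewrite <- pt_opp, vnorm_opp, dot_scale_r, mv_scale, dot_scale_l, dot_scale_r in H2.
  set (a := F (pt x h w)) in *. set (b := F (pt x (-h) w)) in *.
  set (g := dot (gF x) w) in *. set (q := dot (mv (HF x) w) w) in *.
  set (E := rho * vnorm w ^ 3 * h ^ 3) in *.
  replace (2 * rho * vnorm w ^ 3 * h ^ 3) with (E + E) by (unfold E; ring).
  split.
  - replace (a - b - 2 * h * g) with ((a - F x - h * g - h ^ 2 / 2 * q) - (b - F x - h * (-1 * g) - h ^ 2 / 2 * (-1 * (-1 * q)))) by ring.
    eapply Rle_trans. apply Rabs_triang. rewrite Rabs_Ropp. lra.
  - replace (a + b - 2 * F x - h ^ 2 * q) with ((a - F x - h * g - h ^ 2 / 2 * q) + (b - F x - h * (-1 * g) - h ^ 2 / 2 * (-1 * (-1 * q)))) by field.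
    eapply Rle_trans. apply Rabs_triang. lra.
Qed.

Lemma GradStep {d} (F : vec d -> R) gF l (HG : has_gradient F gF)
  (HLg : forall x y, vnorm (vsub (gF x) (gF y)) <= l * vnorm (vsub x y)) (Hl0 : 0 <= l) x w eta : 0 < eta ->
  F (pt x (- eta) w) <= F x - eta * dot (gF x) w + l * eta ^ 2 * vnorm w ^ 2.
Proof.
  intros He.
  destruct (MVT_cor2 (fun t => F (pt x t w)) (fun t => dot (gF (pt x t w)) w) (- eta) 0) as [c [Hc1 Hc2]].
  lra. intros c _. apply D1; auto.
  rewrite pt_0 in Hc1.
  assert (Hl : Rabs (dot (gF (pt x c w)) w - dot (gF x) w) <= l * (Rabs c * vnorm w) * vnorm w).
  { rewrite <- dot_sub_l. eapply Rle_trans. apply cauchy_schwarz. apply Rmult_le_compat_r. apply vnorm_nonneg.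
    rewrite <- vnorm_scale, <- (pt_sub x w c). apply HLg. }
  rewrite (Rabs_left c) in Hl by lra.
  assert (Hw := vnorm_nonneg w).
  assert (Hlb : dot (gF x) w - l * (- c * vnorm w) * vnorm w <= dot (gF (pt x c w)) w).
  { assert (H := Rle_abs (dot (gF x) w - dot (gF (pt x c w)) w)).
    rewrite Rabs_minus_sym in H. lra. }
  assert (l * (- c * vnorm w) * vnorm w <= l * eta * vnorm w ^ 2).
  { replace (l * (- c * vnorm w) * vnorm w) with ((l * vnorm w ^ 2) * (- c)) by ring.
    replace (l * eta * vnorm w ^ 2) with ((l * vnorm w ^ 2) * eta) by ring.
    apply Rmult_le_compat_l. apply Rmult_le_pos; auto; apply pow_le; auto. lra. }
  replace (F (pt x (- eta) w)) with (F x - eta * dot (gF (pt x c w)) w) by lra.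
  nra.
Qed.

Lemma Hbound {d} (gF : vec d -> vec d) HF l (HJ : has_jacobian gF HF)
  (HLg : forall x y, vnorm (vsub (gF x) (gF y)) <= l * vnorm (vsub x y)) x (v : vec d) :
  vnorm (mv (HF x) v) <= l * vnorm v.
Proof.
  set (a := vnorm (mv (HF x) v)). set (b := vnorm v).
  assert (Ha : 0 <= a) by apply vnorm_nonneg. assert (Hb : 0 <= b) by apply vnorm_nonneg.
  assert (Hall : forall e, 0 < e -> a <= (l + e) * b).
  { intros e He. destruct (HJ x e He) as [del [Hdel Hh]].
    set (t := del / (2 * (b + 1))). assert (Ht : 0 < t) by (unfold t; apply Rdiv_lt_0_compat; lra).
    assert (Htv : vnorm (vscale t v) < del).
    { rewrite vnorm_scale, Rabs_right by lra. fold b. unfold t.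
      apply Rmult_lt_reg_r with (2 * (b + 1)). lra.
      replace (del / (2 * (b + 1)) * b * (2 * (b + 1))) with (del * b) by (field; lra). nra. }
    specialize (Hh _ Htv).
    set (J := vsub (vsub (gF (vadd x (vscale t v))) (gF x)) (mv (HF x) (vscale t v))) in Hh.
    assert (E : mv (HF x) (vscale t v) = vsub (vsub (gF (vadd x (vscale t v))) (gF x)) J).
    { apply vec_ext; intros i. unfold J. simpl. ring. }
    assert (H1 := vnorm_sub (vsub (gF (vadd x (vscale t v))) (gF x)) J).
    rewrite <- E, mv_scale, vnorm_scale, Rabs_right in H1 by lra. fold a in H1.
    assert (H2 := HLg (vadd x (vscale t v)) x).
    replace (vsub (vadd x (vscale t v)) x) with (vscale t v) in H2 by (apply vec_ext; intros; simpl; ring).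
    rewrite vnorm_scale, Rabs_right in H2 by lra. rewrite vnorm_scale, Rabs_right in Hh by lra. fold b in H2, Hh.
    assert (t * a <= t * ((l + e) * b)) by lra.
    apply Rmult_le_reg_l with t; auto. }
  destruct (Rle_dec a (l * b)); auto. exfalso.
  set (e := (a - l * b) / (2 * (b + 1))). assert (He : 0 < e) by (unfold e; apply Rdiv_lt_0_compat; lra).
  specialize (Hall e He).
  assert (e * b < a - l * b).
  { unfold e. apply Rle_lt_trans with ((a - l * b) / 2). 
    apply Rmult_le_reg_r with (2 * (b + 1)). lra.
    replace ((a - l * b) / (2 * (b + 1)) * b * (2 * (b + 1))) with ((a - l * b) * b) by (field; lra).
    replace ((a - l * b) / 2 * (2 * (b + 1))) with ((a - l * b) * (b + 1)) by field. nra. lra. }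
  lra.
Qed.

Definition zrange (N : nat) : list Z := map (fun i => (Z.of_nat i - Z.of_nat N)%Z) (seq 0 (2 * N + 1)).

Fixpoint tuples (N : nat) (k : nat) : list (list Z) :=
  match k with
  | O => nil :: nil
  | S k' => flat_map (fun z => map (cons z) (tuples N k')) (zrange N)
  end.

Definition gvec (d N : nat) (L : list Z) : vec d.
Proof.
  refine (MkVec (fun i => if Nat.ltb i d then IZR (nth i L 0%Z) / INR N else 0) _).
  intros i Hi. apply Nat.ltb_ge in Hi. rewrite Hi. reflexivity.
Defined.

Definition grid (d N : nat) : list (vec d) := map (gvec d N) (tuples N d).

Lemma flat_map_length_const {A B} (f : A -> list B) (l : list A) c :
  (forall a, length (f a) = c) -> length (flat_map f l) = (length l * c)%nat.
Proof. intros H. induction l; simpl; auto. rewrite length_app, H, IHl. lia. Qed.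

Lemma tuples_length N k : length (tuples N k) = Nat.pow (2 * N + 1) k.
Proof.
  induction k; simpl; auto.
  rewrite (flat_map_length_const _ _ (length (tuples N k))).
  unfold zrange. rewrite length_map, length_seq, IHk. replace (N + (N + 0) + 1)%nat with (2 * N + 1)%nat by lia. reflexivity.
  intros; rewrite length_map; auto.
Qed.

Lemma grid_length d N : length (grid d N) = Nat.pow (2 * N + 1) d.
Proof. unfold grid. rewrite length_map. apply tuples_length. Qed.

Lemma in_zrange N z : (- Z.of_nat N <= z <= Z.of_nat N)%Z -> In z (zrange N).
Proof.
  intros Hz. unfold zrange. apply in_map_iff. exists (Z.to_nat (z + Z.of_nat N)). split.
  rewrite Z2Nat.id by lia. lia. apply in_seq. lia.
Qed.

Lemma in_tuples N L : (forall z, In z L -> In z (zrange N)) -> In L (tuples N (length L)).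
Proof.
  induction L as [|z L IH]; simpl; intros H; auto.
  apply in_flat_map. exists z. split. apply H; auto.
  apply in_map. apply IH. intros; apply H; auto.
Qed.

Definition zr (N : nat) (x : R) : Z := (up (INR N * x) - 1)%Z.

Lemma zr_spec N x : INR N * x - 1 < IZR (zr N x) <= INR N * x.
Proof. unfold zr. rewrite minus_IZR. destruct (archimed (INR N * x)). simpl. lra. Qed.

Lemma grid_approx d N (u : vec d) : (0 < N)%nat -> (forall i, (i < d)%nat -> Rabs (vc u i) <= 1) ->
  exists w, In w (grid d N) /\ vnorm (vsub w u) <= sqrt (INR d) / INR N.
Proof.
  intros HN Hu. assert (HNr : 0 < INR N) by (apply lt_0_INR; auto).
  set (L := map (fun i => zr N (vc u i)) (seq 0 d)).
  exists (gvec d N L). split.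
  - unfold grid. apply in_map.
    assert (HL : length L = d) by (unfold L; rewrite length_map, length_seq; auto).
    rewrite <- HL at 1.
    apply in_tuples. intros z Hz. unfold L in Hz. apply in_map_iff in Hz. destruct Hz as [i [<- Hi]].
    apply in_seq in Hi. apply in_zrange. specialize (Hu i ltac:(lia)).
    destruct (zr_spec N (vc u i)) as [Z1 Z2].
    assert (Ha1 : vc u i <= 1) by (eapply Rle_trans; [apply Rle_abs | exact Hu]).
    assert (Ha2 : - vc u i <= 1) by (eapply Rle_trans; [apply Rle_abs | rewrite Rabs_Ropp; exact Hu]).
    rewrite INR_IZR_INZ in Z1, Z2.
    split.
    + assert (Hz : IZR (- Z.of_nat N - 1) < IZR (zr N (vc u i))).
      { rewrite minus_IZR, opp_IZR. simpl (IZR 1). set (n := IZR (Z.of_nat N)) in *.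
        assert (0 <= n) by (unfold n; rewrite <- INR_IZR_INZ; apply pos_INR). nra. }
      apply lt_IZR in Hz. lia.
    + assert (Hz : IZR (zr N (vc u i)) <= IZR (Z.of_nat N)).
      { set (n := IZR (Z.of_nat N)) in *.
        assert (0 <= n) by (unfold n; rewrite <- INR_IZR_INZ; apply pos_INR). nra. }
      apply le_IZR in Hz. lia.
  - assert (Hc : forall i, (i < d)%nat -> Rabs (vc (gvec d N L) i - vc u i) <= 1 / INR N).
    { intros i Hi. simpl. assert (E : Nat.ltb i d = true) by (apply Nat.ltb_lt; auto). rewrite E.
      unfold L. rewrite (nth_indep _ 0%Z ((fun i => zr N (vc u i)) 0%nat)) by (rewrite length_map, length_seq; auto).
      rewrite (map_nth (fun i => zr N (vc u i)) (seq 0 d) 0%nat i), seq_nth by auto. simpl.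
      destruct (zr_spec N (vc u i)) as [Z1 Z2].
      apply Rabs_le. split.
      - apply Rmult_le_reg_r with (INR N); auto.
        replace ((IZR (zr N (vc u i)) / INR N - vc u i) * INR N) with (IZR (zr N (vc u i)) - INR N * vc u i) by (field; lra).
        replace (- (1 / INR N) * INR N) with (-1) by (field; lra). lra.
      - apply Rmult_le_reg_r with (INR N); auto.
        replace ((IZR (zr N (vc u i)) / INR N - vc u i) * INR N) with (IZR (zr N (vc u i)) - INR N * vc u i) by (field; lra).
        replace ((1 / INR N) * INR N) with 1 by (field; lra). lra. }
    unfold vnorm. replace (sqrt (INR d) / INR N) with (sqrt (INR d * (1 / INR N) ^ 2)).
    + apply sqrt_le_1_alt. unfold dot.
      rewrite <- sumR_const. apply sumR_le. intros i Hi. specialize (Hc i Hi).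
      assert (0 <= Rabs (vc (gvec d N L) i - vc u i)) by apply Rabs_pos.
      replace (vc (gvec d N L) i - vc u i) with (vc (vsub (gvec d N L) u) i) in Hc by reflexivity.
      set (y := vc (vsub (gvec d N L) u) i) in *.
      assert (y * y = Rabs y * Rabs y) by (rewrite <- Rabs_mult, Rabs_right; nra).
      rewrite H0. simpl. rewrite Rmult_1_r. assert (0 <= Rabs y) by apply Rabs_pos. apply Rmult_le_compat; lra.
    + rewrite sqrt_mult by (try apply pos_INR; apply pow_le; apply Rlt_le, Rdiv_lt_0_compat; lra).
      rewrite sqrt_pow2 by (apply Rlt_le, Rdiv_lt_0_compat; lra). field; lra.
Qed.

Fixpoint askAll {d} (ps : list (vec d)) (k : list R -> qalg d) : qalg d :=
  match ps with
  | nil => k nil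
  | p :: ps' => Ask p (fun y => askAll ps' (fun ys => k (y :: ys)))
  end.

Lemma run_askAll {d} (ps : list (vec d)) k f :
  run (askAll ps k) f = (fst (run (k (map f ps)) f), (length ps + snd (run (k (map f ps)) f))%nat).
Proof.
  revert k. induction ps as [|p ps IH]; intros k; simpl.
  - destruct (run (k nil) f); auto.
  - rewrite IH. simpl. reflexivity.
Qed.

Fixpoint lookup {d} (ps : list (vec d)) (ys : list R) (p : vec d) : R :=
  match ps, ys with
  | p' :: ps', y :: ys' => if excluded_middle_informative (p = p') then y else lookup ps' ys' p
  | _, _ => 0
  end.

Lemma lookup_map {d} (ps : list (vec d)) f p : In p ps -> lookup ps (map f ps) p = f p.
Proof.
  induction ps as [|p' ps IH]; simpl; intros H; [contradiction|].
  destruct (excluded_middle_informative (p = p')) as [->|Hne]; auto.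
  apply IH. destruct H; auto. congruence.
Qed.

Definition pick {A} (G : list A) (P : A -> Prop) : option A :=
  match excluded_middle_informative (exists w, In w G /\ P w) with
  | left H => Some (proj1_sig (constructive_indefinite_description _ H))
  | right _ => None
  end.

Lemma pick_some {A} (G : list A) P w : pick G P = Some w -> In w G /\ P w.
Proof.
  unfold pick. destruct (excluded_middle_informative _) as [H|H]; [|discriminate].
  intros E. inversion E. destruct (constructive_indefinite_description _ H). simpl. auto.
Qed.

Lemma pick_none {A} (G : list A) P : pick G P = None -> forall w, In w G -> ~ P w.
Proof.
  unfold pick. destruct (excluded_middle_informative _) as [H|H]; [discriminate|].
  intros _ w Hw HP. apply H. eauto.
Qed.

Definition queries {d} (G : list (vec d)) h q (x : vec d) : list (vec d) :=
  x :: flat_map (fun w => pt x h w :: pt x (- h) w :: pt x q w :: pt x (- q) w :: nil) G.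

Lemma queries_length {d} (G : list (vec d)) h q x : length (queries G h q x) = (1 + 4 * length G)%nat.
Proof. unfold queries. simpl. induction G; simpl; auto. rewrite IHG. lia. Qed.

Lemma in_queries {d} (G : list (vec d)) h q x w : In w G ->
  In (pt x h w) (queries G h q x) /\ In (pt x (-h) w) (queries G h q x) /\
  In (pt x q w) (queries G h q x) /\ In (pt x (-q) w) (queries G h q x).
Proof.
  intros Hw. unfold queries. repeat split; right; apply in_flat_map; exists w; split; simpl; auto.
Qed.

Definition gtest {d} eps h (x : vec d) (fv : vec d -> R) (w : vec d) : Prop :=
  vnorm w <= 2 /\ eps < (fv (pt x h w) - fv (pt x (- h) w)) / (2 * h).
Definition ctest {d} U q (x : vec d) (fv : vec d -> R) (w : vec d) : Prop :=
  vnorm w <= 2 /\ fv (pt x q w) + fv (pt x (- q) w) - 2 * fv x < - U.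

Definition decide {d} (G : list (vec d)) h q U eta eps (x : vec d) (fv : vec d -> R) : option (vec d) :=
  match pick G (gtest eps h x fv) with
  | Some w => Some (pt x (- eta) w)
  | None =>
    match pick G (ctest U q x fv) with
    | Some w => Some (if Rle_dec (fv (pt x q w)) (fv (pt x (- q) w)) then pt x q w else pt x (- q) w)
    | None => None
    end
  end.

Fixpoint algo {d} (G : list (vec d)) h q U eta eps (n : nat) (x : vec d) : qalg d :=
  match n with
  | O => Ret x
  | S n' => askAll (queries G h q x) (fun ys =>
      match decide G h q U eta eps x (lookup (queries G h q x) ys) with
      | Some x' => algo G h q U eta eps n' x'
      | None => Ret x
      end)
  end.

Lemma algo_inv {d} (G : list (vec d)) h q U eta eps (f : vec d -> R) (Inv : vec d -> nat -> Prop) (Good : vec d -> Prop) :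
  (forall x, Inv x O -> False) ->
  (forall x n x', Inv x (S n) -> decide G h q U eta eps x (lookup (queries G h q x) (map f (queries G h q x))) = Some x' -> Inv x' n) ->
  (forall x n, Inv x (S n) -> decide G h q U eta eps x (lookup (queries G h q x) (map f (queries G h q x))) = None -> Good x) ->
  forall n x, Inv x n -> Good (fst (run (algo G h q U eta eps n x) f)) /\
     (snd (run (algo G h q U eta eps n x) f) <= n * (1 + 4 * length G))%nat.
Proof.
  intros H0 HS HN. induction n as [|n IH]; intros x Hx.
  - exfalso; eauto.
  - unfold algo; fold (@algo d). rewrite run_askAll. rewrite queries_length. cbn [fst snd].
    destruct (decide G h q U eta eps x (lookup (queries G h q x) (map f (queries G h q x)))) eqn:E.
    + destruct (IH v (HS _ _ _ Hx E)) as [A1 A2]. split; auto. nia.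
    + simpl. split; [eapply HN; eauto | lia].
Qed.

Lemma unit_coord {d} (u : vec d) : vnorm u = 1 -> forall i, Rabs (vc u i) <= 1.
Proof.
  intros Hu i. destruct (Nat.lt_ge_cases i d) as [Hi|Hi].
  - assert (H := sumR_term d (fun i => vc u i * vc u i) i ltac:(intros; nra) Hi).
    fold (dot u u) in H. rewrite <- vnorm_sq, Hu in H.
    assert (Rabs (vc u i) * Rabs (vc u i) <= 1) by (rewrite <- Rabs_mult, Rabs_right; nra).
    assert (0 <= Rabs (vc u i)) by apply Rabs_pos. nra.
  - rewrite (vsupp u i Hi), Rabs_R0. lra.
Qed.

Lemma normalize {d} (v : vec d) : 0 < vnorm v -> vnorm (vscale (/ vnorm v) v) = 1.
Proof. intros H. rewrite vnorm_scale, Rabs_right. field; lra. left; apply Rinv_0_lt_compat; auto. Qed.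

Lemma vnorm_pos {d} (v : vec d) : (exists i, (i < d)%nat /\ vc v i <> 0) -> 0 < vnorm v.
Proof.
  intros [i [Hi Hv]]. unfold vnorm. apply sqrt_lt_R0.
  assert (H := sumR_term d (fun i => vc v i * vc v i) i ltac:(intros; nra) Hi).
  fold (dot v v) in H. assert (0 < vc v i * vc v i). { destruct (Rlt_or_le 0 (vc v i)); [nra|].
    assert (vc v i < 0) by (destruct H0; auto; congruence). nra. } lra.
Qed.


Lemma pow3_le2 (a : R) : 0 <= a <= 2 -> a ^ 3 <= 8.
Proof. intros H. replace 8 with (2 ^ 3) by ring. apply pow_incr; lra. Qed.

Lemma round_lemma {d} (F f : vec d -> R) gF HF l rho nu eps h q U eta zeta Delta Keps Slam
  (G : list (vec d))
  (HG : has_gradient F gF) (HJ : has_jacobian gF HF)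
  (HLg : forall x y, vnorm (vsub (gF x) (gF y)) <= l * vnorm (vsub x y))
  (HLH : forall x y, opnorm_le d (msub (HF x) (HF y)) (rho * vnorm (vsub x y)))
  (Hl0 : 0 < l) (Hr : 0 <= rho) (Hnu : forall x, Rabs (F x - f x) <= nu)
  (Heps : 0 < eps) (Hh : 0 < h) (Hq : 0 < q) (Heta : 0 < eta)
  (HP1 : nu / h + 8 * rho * h ^ 2 <= eps / 4)
  (HP2 : Delta <= eta * (3 * eps / 4) - 4 * l * eta ^ 2)
  (HP3 : Delta <= U / 2 - 2 * nu)
  (HP4 : (U + 4 * nu + 16 * rho * q ^ 3) / q ^ 2 + 3 * l * zeta <= Slam)
  (HP5 : zeta <= 1 / 4)
  (HP6 : 5 / 3 * eps <= Keps)
  (Hgrid : forall u : vec d, vnorm u = 1 -> exists w, In w G /\ vnorm (vsub w u) <= zeta)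
  (x : vec d) :
  let fv := lookup (queries G h q x) (map f (queries G h q x)) in
  (forall x', decide G h q U eta eps x fv = Some x' -> F x' <= F x - Delta) /\
  (decide G h q U eta eps x fv = None -> vnorm (gF x) <= Keps /\ lambda_min_ge d (HF x) (- Slam)).
Proof.
  intros fv.
  assert (Hfx : fv x = f x) by (apply lookup_map; left; auto).
  assert (Hfw : forall w, In w G -> fv (pt x h w) = f (pt x h w) /\ fv (pt x (-h) w) = f (pt x (-h) w) /\
                 fv (pt x q w) = f (pt x q w) /\ fv (pt x (-q) w) = f (pt x (-q) w)).
  { intros w Hw. destruct (in_queries G h q x w Hw) as [A1 [A2 [A3 A4]]].
    unfold fv. rewrite !lookup_map; auto. }
  assert (Hnu' : forall y, F y - nu <= f y <= F y + nu).
  { intros y. specialize (Hnu y). split; [ | ];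
    [ assert (H := Rle_abs (F y - f y)) | assert (H := Rle_abs (- (F y - f y))); rewrite Rabs_Ropp in H ]; lra. }
  assert (Hnu0 : 0 <= nu) by (eapply Rle_trans; [apply Rabs_pos | apply (Hnu x)]).
  assert (Eg : forall w, vnorm w <= 2 ->
     Rabs ((f (pt x h w) - f (pt x (-h) w)) / (2 * h) - dot (gF x) w) <= eps / 4).
  { intros w Hw. destruct (GC_est F gF HF rho HG HJ HLH Hr x w h Hh) as [E1 _].
    assert (Hw3 : vnorm w ^ 3 <= 8) by (apply pow3_le2; split; auto; apply vnorm_nonneg).
    assert (2 * rho * vnorm w ^ 3 * h ^ 3 <= 16 * rho * h ^ 3).
    { assert (0 <= rho * h ^ 3) by (apply Rmult_le_pos; auto; apply pow_le; lra). nra. }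
    destruct (Hnu' (pt x h w)). destruct (Hnu' (pt x (-h) w)).
    replace ((f (pt x h w) - f (pt x (- h) w)) / (2 * h) - dot (gF x) w) with
      ((f (pt x h w) - f (pt x (- h) w) - 2 * h * dot (gF x) w) / (2 * h)) by (field; lra).
    unfold Rdiv. rewrite Rabs_mult, (Rabs_right (/ (2 * h))) by (left; apply Rinv_0_lt_compat; lra).
    apply Rle_trans with ((2 * nu + 16 * rho * h ^ 3) * / (2 * h)).
    - apply Rmult_le_compat_r. left; apply Rinv_0_lt_compat; lra.
      apply Rabs_le.
      assert (Q1 := Rle_abs (F (pt x h w) - F (pt x (- h) w) - 2 * h * dot (gF x) w)).
      assert (Q2 := Rle_abs (- (F (pt x h w) - F (pt x (- h) w) - 2 * h * dot (gF x) w))).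
      rewrite Rabs_Ropp in Q2. split; lra.
    - replace ((2 * nu + 16 * rho * h ^ 3) * / (2 * h)) with (nu / h + 8 * rho * h ^ 2) by (field; lra). lra. }
  assert (Ec : forall w, vnorm w <= 2 ->
     f (pt x q w) + f (pt x (-q) w) - 2 * f x - 4 * nu - 16 * rho * q ^ 3 <= q ^ 2 * dot (mv (HF x) w) w).
  { intros w Hw. destruct (GC_est F gF HF rho HG HJ HLH Hr x w q Hq) as [_ E2].
    assert (Hw3 : vnorm w ^ 3 <= 8) by (apply pow3_le2; split; auto; apply vnorm_nonneg).
    assert (2 * rho * vnorm w ^ 3 * q ^ 3 <= 16 * rho * q ^ 3).
    { assert (0 <= rho * q ^ 3) by (apply Rmult_le_pos; auto; apply pow_le; lra). nra. }
    destruct (Hnu' (pt x q w)). destruct (Hnu' (pt x (-q) w)). destruct (Hnu' x).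
    assert (Q3 := Rle_abs (F (pt x q w) + F (pt x (- q) w) - 2 * F x - q ^ 2 * dot (mv (HF x) w) w)).
    lra. }
  split.
  - intros x'. unfold decide.
    destruct (pick G (gtest eps h x fv)) as [w|] eqn:Eg1.
    + intros E. inversion E; subst x'. clear E.
      destruct (pick_some _ _ _ Eg1) as [Hw [Hw2 Hgt]].
      destruct (Hfw w Hw) as [A1 [A2 _]]. rewrite A1, A2 in Hgt.
      specialize (Eg w Hw2).
      assert (Hgw : 3 * eps / 4 <= dot (gF x) w).
      { assert (H := Rle_abs ((f (pt x h w) - f (pt x (- h) w)) / (2 * h) - dot (gF x) w)). lra. }
      assert (HS := GradStep F gF l HG HLg (Rlt_le _ _ Hl0) x w eta Heta).
      assert (vnorm w ^ 2 <= 4) by (assert (0 <= vnorm w) by apply vnorm_nonneg; nra).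
      assert (l * eta ^ 2 * vnorm w ^ 2 <= 4 * l * eta ^ 2) by (assert (0 < l * eta ^ 2) by (apply Rmult_lt_0_compat; auto; apply pow_lt; lra); nra).
      assert (eta * (3 * eps / 4) <= eta * dot (gF x) w) by (apply Rmult_le_compat_l; lra).
      lra.
    + destruct (pick G (ctest U q x fv)) as [w|] eqn:Ec1; [|discriminate].
      intros E. inversion E; subst x'. clear E.
      destruct (pick_some _ _ _ Ec1) as [Hw [Hw2 Hct]].
      destruct (Hfw w Hw) as [_ [_ [A3 A4]]]. rewrite A3, A4, Hfx in Hct. rewrite A3, A4.
      destruct (Hnu' (pt x q w)). destruct (Hnu' (pt x (-q) w)). destruct (Hnu' x).
      destruct (Rle_dec (f (pt x q w)) (f (pt x (- q) w))); lra.
  - unfold decide. destruct (pick G (gtest eps h x fv)) as [w|] eqn:Eg1; [discriminate|].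
    destruct (pick G (ctest U q x fv)) as [w|] eqn:Ec1; [discriminate|]. intros _.
    split.
    + destruct (Req_dec (vnorm (gF x)) 0) as [Z|Z]; [lra|].
      set (g := gF x) in *. assert (Hg : 0 < vnorm g) by (assert (H := vnorm_nonneg g); lra).
      set (u := vscale (/ vnorm g) g).
      destruct (Hgrid u (normalize g Hg)) as [w [Hw Hwu]].
      assert (Hz0 : 0 <= zeta) by (eapply Rle_trans; [apply (vnorm_nonneg (vsub w u)) | exact Hwu]).
      assert (Hw2 : vnorm w <= 2).
      { assert (H := vnorm_tri w u). assert (E1 := normalize g Hg). fold u in E1. rewrite E1 in H. lra. }
      assert (Hnot := pick_none _ _ Eg1 w Hw). unfold gtest in Hnot.
      destruct (Hfw w Hw) as [A1 [A2 _]]. rewrite A1, A2 in Hnot.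
      assert (HD : (f (pt x h w) - f (pt x (- h) w)) / (2 * h) <= eps).
      { destruct (Rle_dec ((f (pt x h w) - f (pt x (- h) w)) / (2 * h)) eps); auto. exfalso; apply Hnot; split; auto; lra. }
      specialize (Eg w Hw2).
      assert (Hgw : dot g w <= 5 * eps / 4).
      { assert (H := Rle_abs (- ((f (pt x h w) - f (pt x (- h) w)) / (2 * h) - dot (gF x) w))).
        rewrite Rabs_Ropp in H. fold g in H. lra. }
      assert (Hgu : dot g u = vnorm g).
      { unfold u. rewrite dot_scale_r, <- vnorm_sq. field. lra. }
      assert (Hgwu : Rabs (dot g (vsub w u)) <= vnorm g * zeta).
      { eapply Rle_trans. apply cauchy_schwarz. apply Rmult_le_compat_l; auto. apply vnorm_nonneg. }
      rewrite dot_sub_r, Hgu in Hgwu.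
      assert (H := Rle_abs (- (dot g w - vnorm g))). rewrite Rabs_Ropp in H.
      assert (vnorm g * zeta <= vnorm g * (1/4)) by (apply Rmult_le_compat_l; lra).
      lra.
    + intros lam [v [Hv Heig]].
      assert (Hv0 := vnorm_pos v Hv).
      set (u := vscale (/ vnorm v) v).
      assert (Hu1 := normalize v Hv0). fold u in Hu1.
      destruct (Hgrid u Hu1) as [w [Hw Hwu]].
      assert (Hz0 : 0 <= zeta) by (eapply Rle_trans; [apply (vnorm_nonneg (vsub w u)) | exact Hwu]).
      assert (Hw2 : vnorm w <= 2).
      { assert (H := vnorm_tri w u). rewrite Hu1 in H. lra. }
      set (H := HF x) in *.
      assert (Hlam : dot (mv H u) u = lam).
      { assert (E : mv H u = vscale lam u).
        { apply vec_ext; intros i. unfold u. rewrite mv_scale. transitivity (/ vnorm v * vc (mv H v) i). reflexivity. rewrite Heig. simpl. ring. }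
        rewrite E, dot_scale_l, <- vnorm_sq, Hu1. ring. }
      assert (Hnot := pick_none _ _ Ec1 w Hw). unfold ctest in Hnot.
      destruct (Hfw w Hw) as [_ [_ [A3 A4]]]. rewrite A3, A4, Hfx in Hnot.
      assert (HC : - U <= f (pt x q w) + f (pt x (- q) w) - 2 * f x).
      { destruct (Rle_dec (- U) (f (pt x q w) + f (pt x (- q) w) - 2 * f x)); auto. exfalso; apply Hnot; split; auto; lra. }
      specialize (Ec w Hw2). fold H in Ec.
      assert (Hq2 : 0 < q ^ 2) by (apply pow_lt; lra).
      assert (Hww : - ((U + 4 * nu + 16 * rho * q ^ 3) / q ^ 2) <= dot (mv H w) w).
      { apply Rmult_le_reg_l with (q ^ 2); auto.
        replace (q ^ 2 * - ((U + 4 * nu + 16 * rho * q ^ 3) / q ^ 2)) with (- (U + 4 * nu + 16 * rho * q ^ 3)) by (field; lra).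
        lra. }
      assert (Hdiff : dot (mv H w) w - dot (mv H u) u = dot (mv H (vsub w u)) w + dot (mv H u) (vsub w u)).
      { rewrite mv_sub, dot_sub_l, dot_sub_r. ring. }
      assert (B1 : Rabs (dot (mv H (vsub w u)) w) <= l * zeta * 2).
      { eapply Rle_trans. apply cauchy_schwarz. 
        assert (HB := Hbound gF HF l HJ HLg x (vsub w u)). fold H in HB.
        assert (0 <= vnorm w) by apply vnorm_nonneg. assert (0 <= vnorm (mv H (vsub w u))) by apply vnorm_nonneg.
        apply Rmult_le_compat; auto. eapply Rle_trans; [exact HB|]. apply Rmult_le_compat_l; lra. }
      assert (B2 : Rabs (dot (mv H u) (vsub w u)) <= l * 1 * zeta).
      { eapply Rle_trans. apply cauchy_schwarz.
        assert (HB := Hbound gF HF l HJ HLg x u). fold H in HB. rewrite Hu1 in HB.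
        assert (0 <= vnorm (mv H u)) by apply vnorm_nonneg.
        apply Rmult_le_compat; auto. apply vnorm_nonneg. }
      assert (Q1 := Rle_abs (dot (mv H (vsub w u)) w)).
      assert (Q2 := Rle_abs (dot (mv H u) (vsub w u))).
      assert (l * zeta * 2 + l * 1 * zeta = 3 * l * zeta) by ring.
      lra.
Qed.

Lemma sqrt_sq' a b : 0 <= b -> a = b ^ 2 -> sqrt a = b.
Proof. intros Hb ->. apply sqrt_pow2; auto. Qed.

Lemma q_facts eps rho : 0 < eps -> 0 < rho ->
  let q := sqrt (eps / rho) in
  0 < q /\ rho * q ^ 2 = eps /\ sqrt (eps ^ 3 / rho) = eps * q /\ sqrt (rho * eps) = rho * q /\
  sqrt (rho * (400 * eps)) = 20 * (rho * q).
Proof.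
  intros He Hr q.
  assert (Hq : 0 < q) by (apply sqrt_lt_R0; apply Rdiv_lt_0_compat; auto).
  assert (Hq2 : q ^ 2 = eps / rho) by (unfold q; simpl; rewrite Rmult_1_r; apply sqrt_sqrt; left; apply Rdiv_lt_0_compat; auto).
  assert (E : rho * q ^ 2 = eps) by (rewrite Hq2; field; lra).
  repeat split; auto.
  - apply sqrt_sq'. nra. rewrite <- E. field. lra.
  - apply sqrt_sq'. nra. rewrite <- E. ring.
  - apply sqrt_sq'. nra. rewrite <- E. ring.
Qed.

Definition vzero (d : nat) : vec d := MkVec (fun _ => 0) (fun _ _ => eq_refl).

Definition Nof (d : nat) (l rho eps : R) : nat :=
  S (Z.to_nat (up (sqrt (INR d) * (4 + 3 * l / sqrt (rho * eps))))).
Definition Delta_of (l rho eps : R) : R :=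
  Rmin (eps ^ 2 / (32 * l)) (eps * sqrt (eps / rho) / 4).
Definition Mof (B l rho eps : R) : nat := S (Z.to_nat (up (2 * B / Delta_of l rho eps))).

Definition theAlgo (d : nat) (B l rho eps nu : R) : qalg d :=
  let q := sqrt (eps / rho) in
  algo (grid d (Nof d l rho eps)) (q / 8) q (eps * q) (eps / (8 * l)) eps
       (Mof B l rho eps) (vzero d).

Lemma INR_up_nat X : 0 <= X -> INR (Z.to_nat (up X)) = IZR (up X).
Proof. intros HX. destruct (archimed X). rewrite INR_IZR_INZ, Z2Nat.id; auto.
  apply le_IZR. simpl. lra. Qed.


Lemma le_prod x y : 1 <= x -> 1 <= y -> x <= x * y.
Proof. intros; nra. Qed.

Lemma sqrt_le_succ x : 0 <= x -> sqrt x <= x + 1.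
Proof. intros Hx. assert (H := sqrt_sqrt x Hx). assert (H0 := sqrt_pos x). nra. Qed.

Lemma inv_le_of_sq a P : 0 < a -> 0 <= P -> / a * / a <= P * P -> / a <= P.
Proof. intros Ha HP H. assert (0 < / a) by (apply Rinv_0_lt_compat; auto). nra. Qed.

Lemma count_bound d B l rho eps : 0 < eps -> 0 < rho -> 0 <= B -> sqrt (rho * eps) < l ->
  INR (Mof B l rho eps * (1 + 4 * Nat.pow (2 * Nof d l rho eps + 1) d)) <=
  exp (20 * INR ((d + 1) * (d + 1)) *
           ln (2 + INR (d + 1) * (1 + B) * (1 + l) * (1 + rho) * (1 + / rho) * (1 + / eps))).
Proof.
  intros He Hr HB Hl.
  assert (Hs : 0 < sqrt (rho * eps)) by (apply sqrt_lt_R0; nra).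
  assert (Hl0 : 0 < l) by lra.
  set (a1 := INR (d + 1)). assert (Ha1 : 1 <= a1) by (unfold a1; rewrite plus_INR; simpl; assert (H := pos_INR d); lra).
  assert (Hir : 0 < / rho) by (apply Rinv_0_lt_compat; auto).
  assert (Hie : 0 < / eps) by (apply Rinv_0_lt_compat; auto).
  set (P := a1 * (1 + B) * (1 + l) * (1 + rho) * (1 + / rho) * (1 + / eps)).
  assert (HP1 : 1 <= P) by (unfold P; repeat (apply Rle_trans with (1 * 1); [lra|]; apply Rmult_le_compat; try lra); lra).
  assert (Hg : forall x r, 1 <= x -> 1 <= r -> P = x * r -> x <= P) by (intros x r Hx Hr0 ->; apply le_prod; auto).
  assert (Hrest : forall x1 x2 x3 x4 x5, 1 <= x1 -> 1 <= x2 -> 1 <= x3 -> 1 <= x4 -> 1 <= x5 -> 1 <= x1 * x2 * x3 * x4 * x5).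
  { intros. repeat (apply Rle_trans with (1 * 1); [lra|]; apply Rmult_le_compat; try lra). }
  assert (Pd : a1 <= P) by (apply (Hg _ ((1 + B) * (1 + l) * (1 + rho) * (1 + / rho) * (1 + / eps))); [lra | apply Hrest; lra | unfold P; ring]).
  assert (PB : 1 + B <= P) by (apply (Hg _ (a1 * (1 + l) * (1 + rho) * (1 + / rho) * (1 + / eps))); [lra | apply Hrest; lra | unfold P; ring]).
  assert (Pl : 1 + l <= P) by (apply (Hg _ (a1 * (1 + B) * (1 + rho) * (1 + / rho) * (1 + / eps))); [lra | apply Hrest; lra | unfold P; ring]).
  assert (Pr : 1 + rho <= P) by (apply (Hg _ (a1 * (1 + B) * (1 + l) * (1 + / rho) * (1 + / eps))); [lra | apply Hrest; lra | unfold P; ring]).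
  assert (Pir : 1 + / rho <= P) by (apply (Hg _ (a1 * (1 + B) * (1 + l) * (1 + rho) * (1 + / eps))); [lra | apply Hrest; lra | unfold P; ring]).
  assert (Pie : 1 + / eps <= P) by (apply (Hg _ (a1 * (1 + B) * (1 + l) * (1 + rho) * (1 + / rho))); [lra | apply Hrest; lra | unfold P; ring]).
  set (Y := 2 + P). assert (HY : 2 <= Y) by (unfold Y; lra). assert (HYP : P <= Y) by (unfold Y; lra).
  set (N := Nof d l rho eps).
  assert (Hsd : sqrt (INR d) <= P).
  { eapply Rle_trans. apply sqrt_le_succ, pos_INR. unfold a1 in Pd. rewrite plus_INR in Pd. simpl in Pd. lra. }
  assert (His : / sqrt (rho * eps) <= P).
  { apply inv_le_of_sq; auto; try lra. rewrite <- Rinv_mult, sqrt_sqrt by nra. rewrite Rinv_mult.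
    apply Rmult_le_compat; try lra. }
  assert (HX0 : 0 <= sqrt (INR d) * (4 + 3 * l / sqrt (rho * eps))).
  { apply Rmult_le_pos. apply sqrt_pos. assert (0 < 3 * l / sqrt (rho * eps)) by (apply Rdiv_lt_0_compat; lra). lra. }
  assert (HN : INR N <= 9 * P ^ 3).
  { unfold N, Nof. rewrite S_INR, INR_up_nat by auto.
    destruct (archimed (sqrt (INR d) * (4 + 3 * l / sqrt (rho * eps)))) as [_ A2].
    assert (3 * l / sqrt (rho * eps) <= 3 * P * P).
    { unfold Rdiv. rewrite Rmult_assoc. replace (3 * P * P) with (3 * (P * P)) by ring.
      apply Rmult_le_compat_l; [lra|]. apply Rmult_le_compat; try lra. left; apply Rinv_0_lt_compat; auto. }
    assert (sqrt (INR d) * (4 + 3 * l / sqrt (rho * eps)) <= P * (4 + 3 * P * P)).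
    { apply Rmult_le_compat; auto. apply sqrt_pos. assert (0 < 3 * l / sqrt (rho * eps)) by (apply Rdiv_lt_0_compat; lra). lra. lra. }
    simpl. nra. }
  assert (HN2 : INR (2 * N + 1) <= Y ^ 8).
  { rewrite plus_INR, mult_INR. simpl (INR 2). simpl (INR 1).
    assert (P ^ 3 <= Y ^ 3) by (apply pow_incr; lra).
    assert (32 <= Y ^ 5) by (replace 32 with (2 ^ 5) by ring; apply pow_incr; lra).
    replace (Y ^ 8) with (Y ^ 3 * Y ^ 5) by ring.
    assert (1 <= P ^ 3) by (apply pow_R1_Rle; lra). nra. }
  set (q := sqrt (eps / rho)).
  assert (Hq : 0 < q) by (apply sqrt_lt_R0; apply Rdiv_lt_0_compat; auto).
  assert (Hiq : / q <= P).
  { apply inv_le_of_sq; auto; try lra. rewrite <- Rinv_mult. unfold q. rewrite sqrt_sqrt by (left; apply Rdiv_lt_0_compat; auto).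
    unfold Rdiv. rewrite Rinv_mult, Rinv_inv. apply Rmult_le_compat; try lra. }
  set (Dl := Delta_of l rho eps).
  assert (HD : / Dl <= 36 * P ^ 3).
  { assert (Ha : / (eps ^ 2 / (32 * l)) <= 32 * P ^ 3).
    { replace (/ (eps ^ 2 / (32 * l))) with (32 * (l * (/ eps * / eps))) by (field; lra).
      simpl. apply Rmult_le_compat_l; [lra|]. rewrite Rmult_1_r.
      apply Rmult_le_compat; try lra. left; apply Rmult_lt_0_compat; auto. apply Rmult_le_compat; lra. }
    assert (Hb : / (eps * q / 4) <= 4 * P ^ 2).
    { replace (/ (eps * q / 4)) with (4 * (/ eps * / q)) by (field; lra). simpl. rewrite Rmult_1_r.
      apply Rmult_le_compat_l; [lra|]. apply Rmult_le_compat; try lra. left; apply Rinv_0_lt_compat; auto. }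
    assert (P ^ 2 <= P ^ 3) by (apply Rle_pow; auto; lra).
    unfold Dl, Delta_of. fold q. unfold Rmin. destruct (Rle_dec _ _); assert (0 <= P ^ 3) by (apply pow_le; lra); lra. }
  assert (HDpos : 0 < Dl).
  { unfold Dl, Delta_of. fold q. apply Rmin_glb_lt; apply Rdiv_lt_0_compat; try nra. }
  set (M := Mof B l rho eps).
  assert (HM : INR M <= Y ^ 11).
  { unfold M, Mof. fold Dl.
    assert (0 <= 2 * B / Dl) by (apply Rmult_le_pos; [lra | left; apply Rinv_0_lt_compat; auto]).
    rewrite S_INR, INR_up_nat by auto. destruct (archimed (2 * B / Dl)) as [_ A2].
    assert (2 * B / Dl <= 72 * P ^ 4).
    { unfold Rdiv. replace (72 * P ^ 4) with ((2 * P) * (36 * P ^ 3)) by ring.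
      apply Rmult_le_compat; try lra. left; apply Rinv_0_lt_compat; auto. }
    assert (P ^ 4 <= Y ^ 4) by (apply pow_incr; lra).
    assert (128 <= Y ^ 7) by (replace 128 with (2 ^ 7) by ring; apply pow_incr; lra).
    assert (1 <= P ^ 4) by (apply pow_R1_Rle; lra).
    replace (Y ^ 11) with (Y ^ 4 * Y ^ 7) by ring. nra. }
  assert (HYd : INR (Nat.pow (2 * N + 1) d) <= Y ^ (8 * d)).
  { rewrite pow_INR, pow_mult. apply pow_incr. split; [apply pos_INR | auto]. }
  assert (HYge1 : 1 <= Y) by lra.
  assert (HT : INR (M * (1 + 4 * Nat.pow (2 * N + 1) d)) <= Y ^ (20 * ((d + 1) * (d + 1)))).
  { rewrite mult_INR, plus_INR, mult_INR. simpl (INR 1). simpl (INR 4).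
    assert (1 <= Y ^ (8 * d)) by (apply pow_R1_Rle; lra).
    assert (8 <= Y ^ 3) by (replace 8 with (2 ^ 3) by ring; apply pow_incr; lra).
    assert (H1 : 1 + 4 * INR (Nat.pow (2 * N + 1) d) <= Y ^ 3 * Y ^ (8 * d)) by nra.
    assert (0 <= INR M) by apply pos_INR.
    apply Rle_trans with (Y ^ 11 * (Y ^ 3 * Y ^ (8 * d))).
    { assert (0 <= INR (Nat.pow (2 * N + 1) d)) by apply pos_INR.
      apply Rmult_le_compat; [auto | lra | auto | lra]. }
    rewrite <- !pow_add. apply Rle_pow; auto. nia. }
  eapply Rle_trans. exact HT.
  right. replace (20 * INR ((d + 1) * (d + 1))) with (INR (20 * ((d + 1) * (d + 1)))) by (rewrite mult_INR; simpl; ring).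
  fold a1. fold P. fold Y. rewrite <- ln_pow by lra. rewrite exp_ln; auto. apply pow_lt; lra.
Qed.

Theorem mainTheorem3 :
  exists c : R, 0 < c /\
  exists K : R, 1 <= K /\
  exists C : R, 0 < C /\
  exists A : forall d : nat, R -> R -> R -> R -> R -> qalg d,
  forall (d : nat) (B l rho eps nu : R)
         (F f : vec d -> R) (gF : vec d -> vec d) (HF : vec d -> mat),
    0 < eps -> 0 < rho ->
    assumptionA d F f gF HF B l rho nu ->
    nu <= c * sqrt (eps ^ 3 / rho) ->
    sqrt (rho * eps) < l ->
    is_SOSP gF HF rho (K * eps) (fst (run (A d B l rho eps nu) f)) /\
    INR (snd (run (A d B l rho eps nu) f)) <=
      exp (C * INR ((d + 1) * (d + 1)) *
           ln (2 + INR (d + 1) * (1 + B) * (1 + l) * (1 + rho) * (1 + / rho)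
                   * (1 + / eps))).
Proof.
  exists (1/64). split; [lra|]. exists 400. split; [lra|]. exists 20. split; [lra|].
  exists theAlgo.
  intros d B l rho eps nu F f gF HF He Hr [HG [HJ [HB [HLg [HLH Hnu]]]]] Hnu2 Hl.
  destruct (q_facts eps rho He Hr) as [Hq [Eq1 [Eq2 [Eq3 Eq4]]]].
  set (q := sqrt (eps / rho)) in *.
  rewrite Eq2 in Hnu2. rewrite Eq3 in Hl.
  assert (Hl0 : 0 < l) by nra.
  assert (HB0 : 0 <= B) by (eapply Rle_trans; [apply Rabs_pos | apply (HB (vzero d))]).
  set (N := Nof d l rho eps).
  set (zeta := sqrt (INR d) / INR N).
  set (Delta := Delta_of l rho eps).
  assert (HNpos : (0 < N)%nat) by (unfold N, Nof; lia).
  assert (HNr : 0 < INR N) by (apply lt_0_INR; auto).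
  set (k := 4 + 3 * l / (rho * q)).
  assert (Hk : 0 < k) by (unfold k; assert (0 < 3 * l / (rho * q)) by (apply Rdiv_lt_0_compat; nra); lra).
  assert (HNk : sqrt (INR d) * k <= INR N).
  { unfold N, Nof. rewrite Eq3. fold k. rewrite S_INR.
    assert (0 <= sqrt (INR d) * k) by (apply Rmult_le_pos; [apply sqrt_pos | lra]).
    rewrite INR_up_nat by auto. destruct (archimed (sqrt (INR d) * k)). lra. }
  assert (Hz0 : 0 <= zeta) by (unfold zeta; apply Rmult_le_pos; [apply sqrt_pos | left; apply Rinv_0_lt_compat; auto]).
  assert (Hzk : zeta * k <= 1).
  { unfold zeta. apply Rmult_le_reg_r with (INR N); auto.
    replace (sqrt (INR d) / INR N * k * INR N) with (sqrt (INR d) * k) by (field; lra). lra. }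
  assert (Hz1 : zeta <= 1 / 4).
  { assert (zeta * 4 <= zeta * k) by (apply Rmult_le_compat_l; auto; unfold k;
      assert (0 < 3 * l / (rho * q)) by (apply Rdiv_lt_0_compat; nra); lra). lra. }
  assert (Hz2 : 3 * l * zeta <= rho * q).
  { assert (E : zeta * k = 4 * zeta + 3 * l * zeta / (rho * q)) by (unfold k; field; nra).
    assert (3 * l * zeta / (rho * q) <= 1) by nra.
    apply Rmult_le_reg_r with (/ (rho * q)). apply Rinv_0_lt_compat; nra.
    rewrite Rinv_r by nra. exact H. }
  assert (HDpos : 0 < Delta).
  { unfold Delta, Delta_of. fold q. apply Rmin_glb_lt; apply Rdiv_lt_0_compat; try nra. }
  assert (Hnu0 : 0 <= nu) by (eapply Rle_trans; [apply Rabs_pos | apply (Hnu (vzero d))]).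
  assert (HP1 : nu / (q / 8) + 8 * rho * (q / 8) ^ 2 <= eps / 4).
  { replace (nu / (q / 8)) with (8 * nu / q) by (field; lra).
    assert (8 * nu / q <= eps / 8).
    { apply Rmult_le_reg_r with q; auto. replace (8 * nu / q * q) with (8 * nu) by (field; lra). nra. }
    replace (8 * rho * (q / 8) ^ 2) with (rho * q ^ 2 / 8) by field. lra. }
  assert (HP2 : Delta <= eps / (8 * l) * (3 * eps / 4) - 4 * l * (eps / (8 * l)) ^ 2).
  { replace (eps / (8 * l) * (3 * eps / 4) - 4 * l * (eps / (8 * l)) ^ 2) with (eps ^ 2 / (32 * l)) by (field; lra).
    apply Rmin_l. }
  assert (HP3 : Delta <= eps * q / 2 - 2 * nu).
  { assert (Delta <= eps * q / 4) by apply Rmin_r. assert (0 < eps * q) by nra. lra. }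
  assert (HP4 : (eps * q + 4 * nu + 16 * rho * q ^ 3) / q ^ 2 + 3 * l * zeta <= sqrt (rho * (400 * eps))).
  { rewrite Eq4.
    assert ((eps * q + 4 * nu + 16 * rho * q ^ 3) / q ^ 2 <= 18 * (rho * q)).
    { assert (Hq2 : 0 < q ^ 2) by (apply pow_lt; lra).
      apply Rmult_le_reg_r with (q ^ 2); auto.
      replace ((eps * q + 4 * nu + 16 * rho * q ^ 3) / q ^ 2 * q ^ 2) with (eps * q + 4 * nu + 16 * rho * q ^ 3) by (field; lra).
      rewrite <- Eq1 in Hnu2 |- *. nra. }
    assert (0 < rho * q) by nra. lra. }
  assert (HP6 : 5 / 3 * eps <= 400 * eps) by lra.
  assert (Hgrid : forall u : vec d, vnorm u = 1 -> exists w, In w (grid d N) /\ vnorm (vsub w u) <= zeta).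
  { intros u Hu. apply grid_approx; auto. intros i _. apply unit_coord; auto. }
  assert (Hround := fun x => round_lemma F f gF HF l rho nu eps (q / 8) q (eps * q) (eps / (8 * l)) zeta Delta
      (400 * eps) (sqrt (rho * (400 * eps))) (grid d N) HG HJ HLg HLH Hl0 (Rlt_le _ _ Hr)
      Hnu He ltac:(lra) Hq ltac:(apply Rdiv_lt_0_compat; lra) HP1 HP2 HP3 HP4 Hz1 HP6 Hgrid x).
  assert (Hinv := algo_inv (grid d N) (q / 8) q (eps * q) (eps / (8 * l)) eps f
     (fun x n => F x + B < INR n * Delta) (is_SOSP gF HF rho (400 * eps))).
  assert (H0 : forall x, F x + B < INR 0 * Delta -> False).
  { intros x Hx. simpl in Hx. assert (H := HB x). assert (H' := Rle_abs (- F x)). rewrite Rabs_Ropp in H'. lra. }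
  assert (HS : forall x n x', F x + B < INR (S n) * Delta ->
     decide (grid d N) (q / 8) q (eps * q) (eps / (8 * l)) eps x
       (lookup (queries (grid d N) (q / 8) q x) (map f (queries (grid d N) (q / 8) q x))) = Some x' ->
     F x' + B < INR n * Delta).
  { intros x n x' Hx Hd. destruct (Hround x) as [R1 _]. specialize (R1 x' Hd). rewrite S_INR in Hx. lra. }
  assert (HN : forall x n, F x + B < INR (S n) * Delta ->
     decide (grid d N) (q / 8) q (eps * q) (eps / (8 * l)) eps x
       (lookup (queries (grid d N) (q / 8) q x) (map f (queries (grid d N) (q / 8) q x))) = None ->
     is_SOSP gF HF rho (400 * eps) x).
  { intros x n _ Hd. destruct (Hround x) as [_ R2]. destruct (R2 Hd). split; auto. }
  assert (Hstart : F (vzero d) + B < INR (Mof B l rho eps) * Delta).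
  { unfold Mof. rewrite S_INR. fold Delta.
    assert (0 <= 2 * B / Delta) by (apply Rmult_le_pos; [lra | left; apply Rinv_0_lt_compat; auto]).
    rewrite INR_up_nat by auto. destruct (archimed (2 * B / Delta)).
    assert (2 * B < (IZR (up (2 * B / Delta)) + 1) * Delta).
    { apply Rle_lt_trans with (2 * B / Delta * Delta). right; field; lra. apply Rmult_lt_compat_r; lra. }
    assert (H' := Rle_abs (F (vzero d))). assert (H'' := HB (vzero d)). lra. }
  destruct (Hinv H0 HS HN _ _ Hstart) as [I1 I2].
  unfold theAlgo. fold q. fold N.
  split; [exact I1|].
  eapply Rle_trans. apply le_INR. exact I2. rewrite grid_length. apply count_bound; auto. rewrite Eq3. auto.
Qed.
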